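(* Let $\alpha$ be a composition, $w\in CRHW_n$ with $w(\alpha)=\beta\neq0$, $\tau=\tau_w$, and let $j\ge1$ belong to $\mathrm{supp}(w)$ but not be its maximum. If $j\notin\mathrm{leg}(w)$, then the greatest entry of $\tau$ in column $j$ is strictly less than the smallest entry of $\tau$ in column $j+1$.
   Context: Box-adding operators on compositions $\alpha=(\alpha_1,\dots,\alpha_k)$: $\mathfrak t_1(\alpha)=(1,\alpha_1,\dots,\alpha_k)$ (a new row on top); for $i\ge2$, $\mathfrak t_i(\alpha)$ increases the leftmost part equal to $i-1$ by $1$ (adding a box in column $i$), and is $0$ if there is no such part; $\mathfrak t_i(0)=0$. Diagrams: row $i$ has $\alpha_i$ left-justified boxes, rows numbered top to bottom. A word $w=\mathfrak t_{i_1}\cdots\mathfrak t_{i_n}$ acts by $w(\alpha)=\mathfrak t_{i_1}(\cdots\mathfrak t_{i_n}(\alpha))$. It is a reverse $k$-hookword if $i_1\le\cdots\le i_{k+1}>i_{k+2}>\cdots>i_n$ ($0\le k\le n-1$), and then $\mathrm{leg}(w)=\{i_{k+1},\dots,i_n\}$. $\mathrm{supp}(w)=\{i_1,\dots,i_n\}$; $w$ is connected if $\mathrm{supp}(w)$ is a set of consecutive integers; $CRHW_n$ is the set of connected reverse hookwords of length $n$. If $w(\alpha)=\beta\ne0$, applying $\mathfrak t_{i_n},\dots,\mathfrak t_{i_1}$ successively adds one box at each step (the box added by $\mathfrak t_{i_m}$ is in column $i_m$); $\tau_w$ is the filling of the set of added boxes in which the box added by $\mathfrak t_{i_m}$ has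 entry $m$. *)

(* Defs.v *)
From mathcomp Require Import all_boot.
Set Implicit Arguments. Unset Strict Implicit. Unset Printing Implicit Defensive.

(* A composition: a finite sequence of positive integers (row i has alpha_i boxes). *)
Definition composition (a : seq nat) : bool := all (fun x => 0 < x) a.

(* Box-adding operator t_i; [None] plays the role of 0. Operators are indexed
   by i >= 1; t_0 is not an operator and is sent to None. *)
Definition t (i : nat) (a : seq nat) : option (seq nat) :=
  if i == 1 then Some (1 :: a)
  else if i is 0 then None
  else let r := find (pred1 i.-1) a in
       if r < size a then Some (set_nth 0 a r i) else None.

Definition topt (i : nat) (a : option (seq nat)) : option (seq nat) := obind (t i) a.

(* w = t_{i_1} ... t_{i_n}, w(alpha) = t_{i_1}( ... t_{i_n}(alpha)) *)
Definition act (w : seq nat) (a : seq nat) : option (seq nat) :=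
  foldr topt (Some a) w.

(* Boxes are triples (row, column, entry), rows and columns 1-indexed,
   rows numbered top to bottom in the current diagram. When t_1 adds a new
   top row, previously added boxes move down one row. *)
Definition shift_rows (bs : seq (nat * nat * nat)) : seq (nat * nat * nat) :=
  [seq ((b.1.1).+1, b.1.2, b.2) | b <- bs].

Definition added_box (i : nat) (a : seq nat) : nat * nat :=
  if i == 1 then (1, 1) else ((find (pred1 i.-1) a).+1, i).

Definition step (i m : nat) (st : option (seq nat * seq (nat * nat * nat)))
  : option (seq nat * seq (nat * nat * nat)) :=
  if st is Some (a, bs) then
    match t i a with
    | Some a' =>
        let bs' := if i == 1 then shift_rows bs else bs in
        Some (a', (added_box i a, m) :: bs')
    | None => None
    end
  else None.

(* Applies t_{i_n}, ..., t_{i_1} successively; the box added by t_{i_m}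
   gets entry m. *)
Definition run (w : seq nat) (a : seq nat) : option (seq nat * seq (nat * nat * nat)) :=
  foldr (fun p st => step p.2 p.1 st) (Some (a, [::])) (zip (iota 1 (size w)) w).

(* tau_w : the filling of the added boxes (meaningful when w(alpha) <> 0). *)
Definition tau (w : seq nat) (a : seq nat) : seq (nat * nat * nat) :=
  if run w a is Some (_, bs) then bs else [::].

Definition col_entries (f : seq (nat * nat * nat)) (c : nat) : seq nat :=
  [seq b.2 | b <- f & b.1.2 == c].

(* w = t_{i_1}...t_{i_n} is a reverse k-hookword:
   i_1 <= ... <= i_{k+1} > i_{k+2} > ... > i_n, with 0 <= k <= n-1.
   (Letters are operator indices, hence >= 1.) *)
Definition rev_hookword_at (w : seq nat) (k : nat) : bool :=
  [&& all (fun i => 0 < i) w, k < size w,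
      sorted leq (take k.+1 w) & sorted (fun x y => y < x) (drop k w)].

Definition leg (w : seq nat) (k : nat) : seq nat := drop k w.

Definition connected (w : seq nat) : Prop :=
  forall a b x, a \in w -> b \in w -> a <= x <= b -> x \in w.

(* Main.v *)
Require Import Defs.
From mathcomp Require Import all_boot.

Lemma run_gen (w : seq nat) : forall s a a' bs,
  foldr (fun p st => step p.2 p.1 st) (Some (a, [::])) (zip (iota s (size w)) w)
    = Some (a', bs) ->
  forall b, b \in bs -> exists2 m, m < size w & b.2 = s + m /\ nth 0 w m = b.1.2.
Proof.
elim: w => [|x w IH] s a a' bs /=.
  by case=> _ <-.
rewrite /step -/step.
case E: (foldr _ _ _) => [[a0 bs0]|] //.
case: (t x a0) => // a1 [_ <-] b; rewrite inE => /orP [/eqP -> | Hb].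
  exists 0 => //=; rewrite addn0; split => //.
  by rewrite /added_box; case: eqP => [->|].
have IH' := IH _ _ _ _ E.
have [m Hm [H1 H2]] : exists2 m, m < size w & b.2 = s.+1 + m /\ nth 0 w m = b.1.2.
  case: (x == 1) Hb => Hb; last exact: IH' Hb.
  move: Hb; rewrite /shift_rows => /mapP [b' Hb' ->] /=.
  exact: IH' Hb'.
by exists m.+1 => //; rewrite H1 addSnnS.
Qed.

Lemma col_spec w a c e : e \in col_entries (tau w a) c ->
  exists2 m, m < size w & e = m.+1 /\ nth 0 w m = c.
Proof.
rewrite /col_entries /tau /run.
case E: (foldr _ _ _) => [[a' bs]|] //.
move=> /mapP [b]; rewrite mem_filter => /andP [/eqP Hc Hb] ->.
have [m Hm [H1 H2]] := @run_gen w 1 a a' bs E b Hb.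
by exists m => //; rewrite H1 add1n -Hc.
Qed.

Theorem mainTheorem8 (alpha beta w : seq nat) (k j : nat) :
  composition alpha ->
  rev_hookword_at w k -> connected w ->
  act w alpha = Some beta ->
  1 <= j -> j \in w -> (exists2 b, b \in w & j < b) ->
  j \notin leg w k ->
  forall e1 e2, e1 \in col_entries (tau w alpha) j ->
                e2 \in col_entries (tau w alpha) j.+1 -> e1 < e2.
Proof.
move=> _ /and4P [_ Hk Hs _] _ _ _ _ _ Hleg e1 e2 /col_spec [m1 Hm1 [-> N1]]
  /col_spec [m2 Hm2 [-> N2]].
have Hm1k : m1 < k.
  rewrite ltnNge; apply/negP => Hkm; move/negP: Hleg; apply.
  rewrite /leg -N1 -(subnKC Hkm) -nth_drop mem_nth // size_drop.
  by rewrite ltn_sub2r // (leq_ltn_trans Hkm).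
rewrite ltnS ltnNge; apply/negP => H21.
case: (ltnP m2 k) => Hm2k; last by move: (leq_trans Hm2k H21); rewrite leqNgt Hm1k.
have Hsz : size (take k.+1 w) = k.+1.
  rewrite size_take; case: (ltnP k.+1 (size w)) => // H; apply/eqP; by rewrite eqn_leq H Hk.
have := sorted_leq_nth leq_trans leqnn 0 Hs.
move=> /(_ m2 m1); rewrite !inE Hsz !nth_take ?ltnS ?(ltnW Hm2k) ?(ltnW Hm1k) //.
rewrite N1 N2 => /(_ isT isT H21); by rewrite ltnn.
Qed.
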